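(* Let $n\ge3$. The map $J\mathcal{E}\to H^1$, $v\mapsto[\,i\,\bar\partial_b v\,]$, is surjective with kernel $J\mathcal{P}$, hence induces an isomorphism $J\mathcal{E}/J\mathcal{P}\cong H^1$, where $$H^1=\frac{\ker(\bar\partial_b:J\mathcal{E}^{0,1}\to J\mathcal{E}^{0,2})}{\operatorname{image}(\bar\partial_b:J\mathcal{E}\to J\mathcal{E}^{0,1})}.$$
   Context: $S^m\subset\mathbb{C}^n$ is the unit sphere, $m=2n-1$, $e_0\in S^m$ a fixed point. $T^{1,0}_b=\mathbb{C}TS^m\cap T^{1,0}\mathbb{C}^n$, $T^{0,1}_b$ its conjugate. For $p+q\le n-1$, $\mathcal{E}^{p,q}$ is the space of sections of the trace-free part (with respect to the Levi form) of $\bigwedge^p(T^{1,0}_b)^*\otimes\bigwedge^q(T^{0,1}_b)^*$; $\bar\partial_b:\mathcal{E}^{p,q}\to\mathcal{E}^{p,q+1}$ is obtained by applying the exterior derivative to a representing form and projecting (on functions, $\bar\partial_bf=df|_{T^{0,1}_b}$). $\mathcal{E}$ denotes real-valued smooth functions on $S^m$; $J$ denotes $\infty$-jets at $e_0$. $J\mathcal{P}\subset J\mathcal{E}$ is the space of jets of real CR pluriharmonic functions (real parts of jets of CR functions, equivalently real functions extending to pluriharmonic functions on the ball near $e_0$). $H^1$ is regarded as a real vector space. *)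

(* Defs.v *)
From HB Require Import structures.
From mathcomp Require Import all_boot all_order all_algebra.
From mathcomp Require Import reals.
From mathcomp Require Import complex.
Set Implicit Arguments. Unset Strict Implicit. Unset Printing Implicit Defensive.
Import Order.TTheory GRing.Theory Num.Theory.
Local Open Scope ring_scope.
Local Open Scope complex_scope.

(* Infinite jets at e0 are modelled by formal power series (complex coeffs)
   in the ambient variables w_j = z_j - e0_j and their conjugates
   wb_j = conj(z_j) - conj(e0_j), j < n.  A monomial is a pair of
   exponent vectors (alpha, beta) standing for w^alpha wb^beta.
   Jets on the sphere S^{2n-1} are classes modulo the ideal generated by
   rho - 1, rho = sum_j z_j conj(z_j).           *)

Section Jets.
Variables (R : realType) (n : nat) (e0 : 'I_n -> R[i]).

Definition mono := ({ffun 'I_n -> nat} * {ffun 'I_n -> nat})%type.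
Definition fps := mono -> R[i].

Definition fps0 : fps := fun _ => 0.
Definition fpsD (f g : fps) : fps := fun m => f m + g m.
Definition fpsZ (c : R[i]) (f : fps) : fps := fun m => c * f m.

Definition incr (a : {ffun 'I_n -> nat}) (j : 'I_n) : {ffun 'I_n -> nat} :=
  [ffun i => if i == j then (a i).+1 else a i].
Definition decr (a : {ffun 'I_n -> nat}) (j : 'I_n) : {ffun 'I_n -> nat} :=
  [ffun i => if i == j then (a i).-1 else a i].

Definition dzb (j : 'I_n) (f : fps) : fps :=
  fun m => ((m.2 j).+1)%:R * f (m.1, incr m.2 j).

Definition mulw (j : 'I_n) (f : fps) : fps :=
  fun m => if (0 < m.1 j)%N then f (decr m.1 j, m.2) else 0.
Definition mulwb (j : 'I_n) (f : fps) : fps :=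
  fun m => if (0 < m.2 j)%N then f (m.1, decr m.2 j) else 0.

Definition mulz (j : 'I_n) (f : fps) : fps := fpsD (mulw j f) (fpsZ (e0 j) f).
Definition mulzb (j : 'I_n) (f : fps) : fps :=
  fpsD (mulwb j f) (fpsZ (conjc (e0 j)) f).

Definition rho1 (f : fps) : fps :=
  fun m => \sum_(j < n) mulz j (mulzb j f) m - f m.

Definition fconj (f : fps) : fps := fun m => conjc (f (m.2, m.1)).
Definition is_real (f : fps) : Prop := forall m, fconj f m = f m.
Definition fRe (f : fps) : fps := fun m => (f m + fconj f m) / 2%:R.

Definition jet_eq (f g : fps) : Prop :=
  exists h : fps, forall m, f m - g m = rho1 h m.

(* (0,1)-forms: coefficient of d wb_j; equality of their jets as sections
   of (T^{0,1}_b)^* : modulo h * dbar rho (dbar rho = sum_j z_j d wb_j)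
   and modulo (rho - 1). *)
Definition form01 := 'I_n -> fps.
Definition form01_eq (a b : form01) : Prop :=
  exists (h : fps) (eta : 'I_n -> fps), forall j m,
    a j m - b j m = mulz j h m + rho1 (eta j) m.

(* (0,2)-forms: coefficient c j k of d wb_j /\ d wb_k (antisymmetric);
   equality as jets of sections of /\^2 (T^{0,1}_b)^* *)
Definition form02 := 'I_n -> 'I_n -> fps.
Definition form02_eq (a b : form02) : Prop :=
  exists (th : 'I_n -> fps) (eta : 'I_n -> 'I_n -> fps), forall j k m,
    a j k m - b j k m = mulz j (th k) m - mulz k (th j) m + rho1 (eta j k) m.
Definition form02_0 : form02 := fun _ _ => fps0.

Definition dbarb0 (f : fps) : form01 := fun j => dzb j f.
Definition dbarb1 (w : form01) : form02 :=
  fun j k m => dzb j (w k) m - dzb k (w j) m.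

(* J P : jets of real CR-pluriharmonic functions = real parts of CR jets *)
Definition is_CR (f : fps) : Prop := form01_eq (dbarb0 f) (fun _ => fps0).
Definition JP (v : fps) : Prop :=
  exists f : fps, is_CR f /\ jet_eq v (fRe f).

Definition i_dbarb (v : fps) : form01 := fun j => fpsZ 'i (dzb j v).

Definition cocycle01 (w : form01) : Prop := form02_eq (dbarb1 w) form02_0.
Definition coboundary01 (w : form01) : Prop :=
  exists u : fps, is_real u /\ form01_eq w (dbarb0 u).
Definition H1_eq (a b : form01) : Prop :=
  coboundary01 (fun j => fpsD (a j) (fpsZ (-1) (b j))).

End Jets.

(* Main.v *)
Require Import Defs.
From HB Require Import structures.
From mathcomp Require Import all_boot all_order all_algebra.
From mathcomp Require Import boolp reals functions.
From mathcomp Require Import complex ring.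
Import Order.TTheory GRing.Theory Num.Theory.
Local Open Scope ring_scope.
Local Open Scope complex_scope.

Section Core.
Variables (R : realType) (n : nat) (e0 : 'I_n -> R[i]).
Local Notation C := R[i].
Local Notation fps := (fps R n).
Local Notation mono := (mono n).
Implicit Types (f g h : fps) (a b : {ffun 'I_n -> nat}).

Lemma incrK a j : decr (incr a j) j = a.
Proof. by apply/ffunP => i; rewrite !ffunE; case: eqP. Qed.
Lemma decrK a j : (0 < a j)%N -> incr (decr a j) j = a.
Proof. by move=> h; apply/ffunP => i; rewrite !ffunE; case: eqP => // ->; rewrite prednK. Qed.
Lemma incr_id a j : incr a j j = (a j).+1.
Proof. by rewrite ffunE eqxx. Qed.
Lemma decr_id a j : decr a j j = (a j).-1.
Proof. by rewrite ffunE eqxx. Qed.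
Lemma incr_ne a j k : j != k -> incr a j k = a k.
Proof. by move=> h; rewrite ffunE eq_sym (negPf h). Qed.
Lemma decr_ne a j k : j != k -> decr a j k = a k.
Proof. by move=> h; rewrite ffunE eq_sym (negPf h). Qed.
Lemma incrC a j k : incr (incr a j) k = incr (incr a k) j.
Proof. apply/ffunP => i; rewrite !ffunE; case: (i =P j); case: (i =P k) => //= *; by subst. Qed.
Lemma decrC a j k : decr (decr a j) k = decr (decr a k) j.
Proof. apply/ffunP => i; rewrite !ffunE; case: (i =P j); case: (i =P k) => //= *; by subst. Qed.
Lemma incr_decr a j k : j != k -> incr (decr a k) j = decr (incr a j) k.
Proof.
move=> h; apply/ffunP => i; rewrite !ffunE; case: eqP => [->|]; case: eqP => //.
by move=> e; rewrite e eqxx in h.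
Qed.

Definition sz a := (\sum_i a i)%N.
Lemma sz_decr a j : (0 < a j)%N -> (sz (decr a j) < sz a)%N.
Proof.
move=> h; rewrite /sz (bigD1 j) //= [X in (_ < X)%N](bigD1 j) //= decr_id.
have -> : (\sum_(i | i != j) decr a j i = \sum_(i | i != j) a i)%N.
  by apply: eq_bigr => i hi; rewrite decr_ne // eq_sym.
by rewrite ltn_add2r prednK.
Qed.

Lemma addE f g m : (f + g) m = f m + g m. Proof. by []. Qed.
Lemma oppE f m : (- f) m = - f m. Proof. by []. Qed.
Lemma subE f g m : (f - g) m = f m - g m. Proof. by []. Qed.
Lemma zeroE m : (0 : fps) m = 0. Proof. by []. Qed.
Lemma sumE (F : 'I_n -> fps) m : (\sum_i F i) m = \sum_i F i m.
Proof. by rewrite fct_sumE. Qed.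
Lemma fpsZE c f m : fpsZ c f m = c * f m. Proof. by []. Qed.
Lemma fpsDE f g : fpsD f g = f + g. Proof. by []. Qed.

Ltac pw := apply/funext => ?; rewrite /= ?(subE, addE, oppE, zeroE) /=; ring.

Lemma dzb_zmod j : zmod_morphism (@dzb R n j).
Proof. by move=> f g; apply/funext => m; rewrite /dzb !subE mulrBr. Qed.
HB.instance Definition _ j := GRing.isZmodMorphism.Build fps fps (@dzb R n j) (dzb_zmod j).
Lemma mulw_zmod j : zmod_morphism (@mulw R n j).
Proof. by move=> f g; apply/funext => m; rewrite /mulw !subE; case: ifP => //; rewrite subr0. Qed.
HB.instance Definition _ j := GRing.isZmodMorphism.Build fps fps (@mulw R n j) (mulw_zmod j).
Lemma mulwb_zmod j : zmod_morphism (@mulwb R n j).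
Proof. by move=> f g; apply/funext => m; rewrite /mulwb !subE; case: ifP => //; rewrite subr0. Qed.
HB.instance Definition _ j := GRing.isZmodMorphism.Build fps fps (@mulwb R n j) (mulwb_zmod j).
Lemma fpsZ_zmod c : zmod_morphism (@fpsZ R n c).
Proof. by move=> f g; apply/funext => m; rewrite !fpsZE !subE mulrBr. Qed.
HB.instance Definition _ c := GRing.isZmodMorphism.Build fps fps (@fpsZ R n c) (fpsZ_zmod c).

Lemma dzbZ j c f : dzb j (fpsZ c f) = fpsZ c (dzb j f).
Proof. by apply/funext => m; rewrite /dzb !fpsZE mulrCA. Qed.
Lemma mulwZ j c f : mulw j (fpsZ c f) = fpsZ c (mulw j f).
Proof. by apply/funext => m; rewrite /mulw !fpsZE; case: ifP; rewrite ?mulr0. Qed.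
Lemma mulwbZ j c f : mulwb j (fpsZ c f) = fpsZ c (mulwb j f).
Proof. by apply/funext => m; rewrite /mulwb !fpsZE; case: ifP; rewrite ?mulr0. Qed.
Lemma fpsZZ c d f : fpsZ c (fpsZ d f) = fpsZ (c * d) f.
Proof. by apply/funext => m; rewrite !fpsZE mulrA. Qed.
Lemma fpsZDl c d f : fpsZ (c + d) f = fpsZ c f + fpsZ d f.
Proof. by apply/funext => m; rewrite !fpsZE addE !fpsZE mulrDl. Qed.
Lemma fpsZ1 f : fpsZ 1 f = f.
Proof. by apply/funext => m; rewrite !fpsZE mul1r. Qed.
Lemma fpsZ_sum (F : 'I_n -> C) f : fpsZ (\sum_i F i) f = \sum_i fpsZ (F i) f.
Proof. by apply/funext => m; rewrite fpsZE sumE mulr_suml. Qed.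

Lemma dzb_mulw j k f : dzb j (mulw k f) = mulw k (dzb j f).
Proof. by apply/funext => -[a b]; rewrite /dzb /mulw /=; case: ifP; rewrite ?mulr0. Qed.
Lemma mulwC j k f : mulw j (mulw k f) = mulw k (mulw j f).
Proof.
apply/funext => -[a b]; rewrite /mulw /=.
case: (eqVneq j k) => [->//|njk].
rewrite decr_ne // decr_ne 1?eq_sym // decrC.
by case: ifP; case: ifP.
Qed.
Lemma mulwbC j k f : mulwb j (mulwb k f) = mulwb k (mulwb j f).
Proof.
apply/funext => -[a b]; rewrite /mulwb /=.
case: (eqVneq j k) => [->//|njk].
rewrite decr_ne // decr_ne 1?eq_sym // decrC.
by case: ifP; case: ifP.
Qed.
Lemma mulw_mulwb j k f : mulw j (mulwb k f) = mulwb k (mulw j f).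
Proof. by apply/funext => -[a b]; rewrite /mulwb /mulw /=; case: ifP; case: ifP. Qed.
Lemma dzbC j k f : dzb j (dzb k f) = dzb k (dzb j f).
Proof.
apply/funext => -[a b]; rewrite /dzb /=.
case: (eqVneq j k) => [->//|njk].
by rewrite incr_ne // incr_ne 1?eq_sym // incrC mulrA mulrA [X in X * _]mulrC.
Qed.
Lemma dzb_mulwb j k f :
  dzb j (mulwb k f) = (if j == k then f else 0) + mulwb k (dzb j f).
Proof.
apply/funext => -[a b]; rewrite addE /dzb /mulwb /=.
case: (eqVneq j k) => [<-|njk].
  rewrite incr_id /= incrK.
  case: (posnP (b j)) => [->|bp]; first by rewrite mul1r addr0.
  by rewrite decr_id prednK // decrK // -natr1 mulrDl mul1r addrC.
rewrite incr_ne // zeroE add0r -incr_decr // decr_ne 1?eq_sym //.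
by case: ifP; rewrite ?mulr0.
Qed.

Definition lam f : fps := \sum_j fpsZ (conjc (e0 j)) (mulw j f).
Definition onel f : fps := f + lam f.
Definition Bop j f : fps := mulwb j (onel f) + fpsZ (conjc (e0 j)) (lam f).
Definition Mop (q : nat) f : fps := \sum_j Bop j (dzb j f) + fpsZ q%:R (onel f).

Lemma mulzE j f : mulz e0 j f = mulw j f + fpsZ (e0 j) f. Proof. by []. Qed.
Lemma mulzbE j f : mulzb e0 j f = mulwb j f + fpsZ (conjc (e0 j)) f. Proof. by []. Qed.
Lemma rho1E f : rho1 e0 f = \sum_j mulz e0 j (mulzb e0 j f) - f.
Proof. by apply/funext => m; rewrite subE sumE. Qed.

Lemma lam_zmod : zmod_morphism lam.
Proof. by move=> f g; rewrite /lam -sumrB; apply: eq_bigr => j _; rewrite !raddfB. Qed.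
HB.instance Definition _ := GRing.isZmodMorphism.Build fps fps lam lam_zmod.
Lemma onel_zmod : zmod_morphism onel.
Proof. by move=> f g; rewrite /onel raddfB opprD addrACA. Qed.
HB.instance Definition _ := GRing.isZmodMorphism.Build fps fps onel onel_zmod.
Lemma Bop_zmod j : zmod_morphism (Bop j).
Proof. by move=> f g; rewrite /Bop !raddfB opprD addrACA. Qed.
HB.instance Definition _ j := GRing.isZmodMorphism.Build fps fps (Bop j) (Bop_zmod j).
Lemma mulz_zmod j : zmod_morphism (mulz e0 j).
Proof. by move=> f g; rewrite !mulzE !raddfB opprD addrACA. Qed.
HB.instance Definition _ j := GRing.isZmodMorphism.Build fps fps (mulz e0 j) (mulz_zmod j).
Lemma mulzb_zmod j : zmod_morphism (mulzb e0 j).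
Proof. by move=> f g; rewrite !mulzbE !raddfB opprD addrACA. Qed.
HB.instance Definition _ j := GRing.isZmodMorphism.Build fps fps (mulzb e0 j) (mulzb_zmod j).
Lemma rho1_zmod : zmod_morphism (rho1 e0).
Proof.
move=> f g; rewrite !rho1E.
have -> : \sum_j mulz e0 j (mulzb e0 j (f - g)) =
   \sum_j mulz e0 j (mulzb e0 j f) - \sum_j mulz e0 j (mulzb e0 j g).
  by rewrite -sumrB; apply: eq_bigr => j _; rewrite !raddfB.
by pw.
Qed.
HB.instance Definition _ := GRing.isZmodMorphism.Build fps fps (rho1 e0) rho1_zmod.
Lemma Mop_zmod q : zmod_morphism (Mop q).
Proof.
move=> f g; rewrite /Mop.
have -> : \sum_j Bop j (dzb j (f - g)) =
   \sum_j Bop j (dzb j f) - \sum_j Bop j (dzb j g).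
  by rewrite -sumrB; apply: eq_bigr => j _; rewrite !raddfB.
rewrite !raddfB.
by pw.
Qed.
HB.instance Definition _ q := GRing.isZmodMorphism.Build fps fps (Mop q) (Mop_zmod q).

Definition commw (T : fps -> fps) :=
  (forall k f, T (mulw k f) = mulw k (T f)) /\ (forall c f, T (fpsZ c f) = fpsZ c (T f)).
Definition polyop (T : fps -> fps) := commw T /\ (forall k f, T (mulwb k f) = mulwb k (T f)).

Section Comm.
Variable T : {additive fps -> fps}.
Lemma lamC : commw T -> forall f, T (lam f) = lam (T f).
Proof. by move=> [hw hZ] f; rewrite /lam raddf_sum; apply: eq_bigr => j _; rewrite hZ hw. Qed.
Lemma onelC : commw T -> forall f, T (onel f) = onel (T f).
Proof. by move=> h f; rewrite /onel raddfD lamC. Qed.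
Lemma mulzC : commw T -> forall j f, T (mulz e0 j f) = mulz e0 j (T f).
Proof. by move=> [hw hZ] j f; rewrite !mulzE raddfD hw hZ. Qed.
Lemma BopC : polyop T -> forall j f, T (Bop j f) = Bop j (T f).
Proof. by move=> [[hw hZ] hb] j f; rewrite /Bop raddfD hb hZ onelC ?lamC. Qed.
Lemma mulzbC : polyop T -> forall j f, T (mulzb e0 j f) = mulzb e0 j (T f).
Proof. by move=> [[hw hZ] hb] j f; rewrite !mulzbE raddfD hb hZ. Qed.
Lemma rho1C : polyop T -> forall f, T (rho1 e0 f) = rho1 e0 (T f).
Proof.
move=> h f; rewrite !rho1E raddfB raddf_sum; congr (_ - _).
by apply: eq_bigr => j _; rewrite mulzC ?mulzbC //; case: h.
Qed.
End Comm.

Lemma polyop_mulw k : polyop (mulw k).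
Proof. by split; [split|] => *; rewrite ?mulwZ ?mulw_mulwb // mulwC. Qed.
Lemma polyop_mulwb k : polyop (mulwb k).
Proof. by split; [split|] => *; rewrite ?mulwbZ ?mulw_mulwb // mulwbC. Qed.
Lemma polyop_Z c : polyop (fpsZ c).
Proof.
split; [split|] => *; rewrite ?mulwZ ?mulwbZ //.
by rewrite !fpsZZ mulrC.
Qed.
Lemma commw_dzb j : commw (dzb j).
Proof. by split => *; rewrite ?dzb_mulw ?dzbZ. Qed.

Lemma polyopP (X : fps -> fps) :
  (forall T : {additive fps -> fps}, polyop T -> forall f, T (X f) = X (T f)) -> polyop X.
Proof.
move=> h; split; [split|] => *.
- by rewrite (h (mulw _)) //; exact: polyop_mulw.
- by rewrite (h (fpsZ _)) //; exact: polyop_Z.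
- by rewrite (h (mulwb _)) //; exact: polyop_mulwb.
Qed.
Lemma polyop_lam : polyop lam.
Proof. by apply: polyopP => T [h _] f; rewrite lamC. Qed.
Lemma polyop_onel : polyop onel.
Proof. by apply: polyopP => T [h _] f; rewrite onelC. Qed.
Lemma polyop_mulz j : polyop (mulz e0 j).
Proof. by apply: polyopP => T [h _] f; rewrite mulzC. Qed.
Lemma polyop_Bop j : polyop (Bop j).
Proof. by apply: polyopP => T h f; rewrite BopC. Qed.
Lemma polyop_rho1 : polyop (rho1 e0).
Proof. by apply: polyopP => T h f; rewrite rho1C. Qed.

Lemma sum_delta (F : 'I_n -> fps) j : \sum_k (if j == k then F k else 0) = F j.
Proof.
rewrite (bigD1 j) //= eqxx big1 ?addr0 // => k /negPf.
by rewrite eq_sym => ->.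
Qed.

Lemma dzb_lam j f : dzb j (lam f) = lam (dzb j f).
Proof. exact: (lamC (dzb j) (commw_dzb j)). Qed.
Lemma dzb_onel j f : dzb j (onel f) = onel (dzb j f).
Proof. exact: (onelC (dzb j) (commw_dzb j)). Qed.
Lemma dzb_mulz j k f : dzb j (mulz e0 k f) = mulz e0 k (dzb j f).
Proof. exact: (mulzC (dzb j) (commw_dzb j)). Qed.
Lemma dzb_mulzb j k f :
  dzb j (mulzb e0 k f) = (if j == k then f else 0) + mulzb e0 k (dzb j f).
Proof. by rewrite !mulzbE raddfD /= dzb_mulwb dzbZ addrA. Qed.
Lemma dzb_Bop j k f :
  dzb j (Bop k f) = (if j == k then onel f else 0) + Bop k (dzb j f).
Proof. by rewrite /Bop raddfD /= dzb_mulwb dzbZ dzb_lam dzb_onel addrA. Qed.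
Lemma dzb_rho1 j f : dzb j (rho1 e0 f) = mulz e0 j f + rho1 e0 (dzb j f).
Proof.
rewrite !rho1E raddfB raddf_sum /=.
under eq_bigr do rewrite dzb_mulz dzb_mulzb raddfD.
rewrite big_split /=.
have -> : \sum_(k < n) mulz e0 k (if j == k then f else 0) = mulz e0 j f.
  rewrite -[RHS](sum_delta (fun k => mulz e0 k f)); apply: eq_bigr => k _.
  by case: ifP; rewrite ?raddf0.
by rewrite addrA.
Qed.

Definition Efun f : fps := \sum_j mulwb j (dzb j f).
Definition Nfun f : fps := \sum_j fpsZ (conjc (e0 j)) (dzb j f).
Lemma EfunE f m : Efun f m = (sz m.2)%:R * f m.
Proof.
rewrite /Efun sumE /sz natr_sum mulr_suml; apply: eq_bigr => j _.
case: m => a b; rewrite /mulwb /dzb /=.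
case: (posnP (b j)) => [->|bp]; first by rewrite mul0r.
by rewrite decr_id prednK // decrK.
Qed.
Lemma lamE g a b : lam g (a, b) =
  \sum_j conjc (e0 j) * (if (0 < a j)%N then g (decr a j, b) else 0).
Proof. by rewrite /lam sumE. Qed.

Lemma Mop_split q f : Mop q f =
  (Efun f + fpsZ q%:R f) + lam (Efun f + fpsZ q%:R f + Nfun f).
Proof.
rewrite /Mop /Bop big_split /=.
have -> : \sum_j mulwb j (onel (dzb j f)) = onel (Efun f).
  rewrite /Efun raddf_sum; apply: eq_bigr => j _ /=.
  by rewrite (onelC (mulwb j)) //; case: (polyop_mulwb j).
have -> : \sum_j fpsZ (conjc (e0 j)) (lam (dzb j f)) = lam (Nfun f).
  rewrite /Nfun raddf_sum; apply: eq_bigr => j _ /=.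
  by case: polyop_lam => -[_ ->].
rewrite !raddfD /=; case: polyop_lam => -[_ ->] _.
rewrite /onel; pw.
Qed.

Definition Yq q f : fps := Efun f + fpsZ q%:R f + Nfun f.
Definition dq q (m : mono) : C := (sz m.2 + q)%:R.
Definition Tq q f : fps := lam (Yq q f).
Lemma MopE q f m : Mop q f m = dq q m * f m + Tq q f m.
Proof. by rewrite Mop_split addE addE EfunE fpsZE /dq natrD mulrDl. Qed.

Lemma Tq_low q g1 g2 m : (forall m', (sz m'.1 < sz m.1)%N -> g1 m' = g2 m') ->
  Tq q g1 m = Tq q g2 m.
Proof.
case: m => a b /= H; rewrite /Tq !lamE; apply: eq_bigr => j _.
case: ifP => // hp.
have E : forall b', g1 (decr a j, b') = g2 (decr a j, b').
  by move=> b'; apply: H; exact: sz_decr.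
rewrite /Yq !addE !EfunE !fpsZE /Nfun !sumE /= !E; congr (_ * (_ + _)).
by apply: eq_bigr => k _; rewrite !fpsZE /dzb /= E.
Qed.

Section Rec.
Variables (d : mono -> C) (T : fps -> fps) (h : fps).
Hypothesis dnz : forall m, d m != 0.
Hypothesis Tlow : forall g1 g2 m,
  (forall m', (sz m'.1 < sz m.1)%N -> g1 m' = g2 m') -> T g1 m = T g2 m.
Fixpoint it k : fps :=
  if k is k'.+1 then fun m => (h m - T (it k') m) / d m else fun m => h m / d m.
Lemma it_step k m : (sz m.1 < k)%N -> it k m = it k.+1 m.
Proof.
elim: k m => [//|k IH] m hm /=; congr ((_ - _) / _).
apply: Tlow => m' hm'; apply: IH; exact: leq_trans hm' _.
Qed.
Lemma it_stable k k' m : (sz m.1 < k)%N -> (k <= k')%N -> it k m = it k' m.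
Proof.
move=> hk; elim: k' => [|k' IH]; first by rewrite leqn0 => /eqP ->.
rewrite leq_eqVlt => /orP[/eqP -> //|hk'].
rewrite IH // it_step //; exact: leq_trans hk hk'.
Qed.
Definition sol m := it (sz m.1).+1 m.
Lemma solP m : d m * sol m + T sol m = h m.
Proof.
have -> : T sol m = T (it (sz m.1)) m.
  apply: Tlow => m' hm'; rewrite /sol; apply: it_stable => //.
rewrite /sol /=; field; exact: dnz.
Qed.
Lemma sol_uniq g1 g2 : (forall m, d m * g1 m + T g1 m = d m * g2 m + T g2 m) ->
  g1 = g2.
Proof.
move=> H; apply/funext => m.
suff: forall k m, (sz m.1 < k)%N -> g1 m = g2 m by apply; exact: ltnSn.
elim=> [//|k IH] {}m hm.
have E2 : T g1 m = T g2 m.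
  by apply: Tlow => m' hm'; apply: IH; exact: leq_trans hm' _.
have := H m; rewrite E2 => E.
apply: (mulfI (dnz m)); exact: (addIr _ E).
Qed.
End Rec.

Definition Pq q (g : fps) : fps := sol (dq q) (Tq q) g.
Lemma dq_nz q m : (0 < q)%N -> dq q m != 0.
Proof. by move=> hq; rewrite /dq pnatr_eq0 addn_eq0 negb_and -!lt0n hq orbT. Qed.
Lemma PqK q g : (0 < q)%N -> Mop q (Pq q g) = g.
Proof.
move=> hq; apply/funext => m; rewrite MopE; apply: solP.
  by move=> ?; exact: dq_nz.
exact: Tq_low.
Qed.
Lemma Mop_inj0 q f : (0 < q)%N -> Mop q f = 0 -> f = 0.
Proof.
move=> hq H; apply: (@sol_uniq (dq q) (Tq q)).
- by move=> ?; exact: dq_nz.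
- exact: Tq_low.
move=> m; rewrite -!MopE H raddf0 //.
Qed.

Lemma fpsZS q f : fpsZ (q.+1)%:R f = fpsZ q%:R f + f.
Proof. by apply/funext => m; rewrite addE !fpsZE -natr1 mulrDl mul1r. Qed.

Lemma dzb_Mop j q f : dzb j (Mop q f) = Mop q.+1 (dzb j f).
Proof.
rewrite /Mop raddfD raddf_sum /=.
under eq_bigr do rewrite dzb_Bop dzbC.
rewrite big_split /= (sum_delta (fun k => onel (dzb k f))) dzbZ dzb_onel fpsZS.
by rewrite addrC -addrA [X in _ + X]addrC.
Qed.

Lemma Mop_mulz q j f : Mop q (mulz e0 j f) = mulz e0 j (Mop q f).
Proof.
have [[hw hZ] hb] := polyop_mulz j.
rewrite /Mop [in RHS]raddfD /= hZ -(onelC (mulz e0 j)) //; congr (_ + _).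
rewrite [in RHS]raddf_sum; apply: eq_bigr => k _ /=; by rewrite dzb_mulz -(BopC (mulz e0 j)) //; exact: polyop_mulz.
Qed.

Hypothesis He0 : \sum_(j < n) e0 j * conjc (e0 j) = 1.

Lemma sum_mulz g : \sum_k fpsZ (conjc (e0 k)) (mulz e0 k g) = onel g.
Proof.
apply/funext => m; rewrite sumE /onel addE /lam sumE.
under eq_bigr do rewrite fpsZE mulzE addE fpsZE mulrDr.
rewrite big_split /= addrC; congr (_ + _).
under eq_bigr do rewrite mulrA.
rewrite -mulr_suml -[RHS]mul1r -He0; congr (_ * _).
by apply: eq_bigr => k _; rewrite mulrC.
Qed.

Lemma rho1_split h : rho1 e0 h = \sum_k mulwb k (mulz e0 k h) + lam h.
Proof.
rewrite rho1E.
under eq_bigr do rewrite mulzbE raddfD /= (proj2 (polyop_mulz _)) (proj2 (proj1 (polyop_mulz _))).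
rewrite big_split /= sum_mulz /onel; pw.
Qed.

Lemma sum_Bop_mulz g : \sum_k Bop k (mulz e0 k g) = rho1 e0 (onel g).
Proof.
rewrite rho1_split /Bop big_split /=; congr (_ + _).
  apply: eq_bigr => k _; congr (mulwb k _).
  by rewrite (onelC (mulz e0 k)) //; case: (polyop_mulz k).
rewrite -sum_mulz raddf_sum; apply: eq_bigr => k _ /=.
by rewrite (proj2 (proj1 polyop_lam)).
Qed.

Lemma rho1D f g : rho1 e0 (f + g) = rho1 e0 f + rho1 e0 g.
Proof. exact: raddfD. Qed.

Lemma Mop_rho1 q f : Mop q (rho1 e0 f) = rho1 e0 (Mop q.+1 f).
Proof.
rewrite /Mop.
under eq_bigr do rewrite dzb_rho1 raddfD /=.
rewrite big_split /= sum_Bop_mulz.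
rewrite [in RHS]raddfD [in RHS]raddf_sum /=.
under [in RHS]eq_bigr do rewrite (BopC (rho1 e0) polyop_rho1).
rewrite (proj2 (proj1 polyop_rho1)) fpsZS.
rewrite -(onelC (rho1 e0)); last by case: polyop_rho1.
pw.
Qed.

Definition iota (c : 'I_n -> fps) : fps := \sum_j Bop j (c j).

Lemma cartan (c : 'I_n -> fps) k :
  Mop 1 (c k) = dzb k (iota c) + \sum_j Bop j (dzb j (c k) - dzb k (c j)).
Proof.
rewrite /iota raddf_sum /=.
under eq_bigr do rewrite dzb_Bop.
rewrite big_split /= (sum_delta (fun j => onel (c j))).
under [X in _ = _ + X]eq_bigr do rewrite raddfB.
rewrite sumrB /Mop fpsZ1.
pw.
Qed.

Lemma MopB q f g : Mop q (f - g) = Mop q f - Mop q g.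
Proof. exact: raddfB. Qed.
Lemma MopD q f g : Mop q (f + g) = Mop q f + Mop q g.
Proof. exact: raddfD. Qed.

Lemma BopB j f g : Bop j (f - g) = Bop j f - Bop j g.
Proof. exact: raddfB. Qed.
Lemma BopD j f g : Bop j (f + g) = Bop j f + Bop j g.
Proof. exact: raddfD. Qed.

Lemma exact_cocycle (w : form01 R n) : cocycle01 e0 w ->
  exists F : fps, form01_eq e0 w (dbarb0 F).
Proof.
case=> th [eta H].
have Hw : forall j k, dzb j (w k) - dzb k (w j) =
    mulz e0 j (th k) - mulz e0 k (th j) + rho1 e0 (eta j k).
  move=> j k; apply/funext => m; have := H j k m.
  rewrite /form02_0 /fps0 subr0 /dbarb1 => E; rewrite !(subE, addE) -E //.
pose c := fun k => Pq 1 (w k).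
pose th' := fun k => Pq 2 (th k).
pose eta' := fun j k => Pq 3 (eta j k).
have Hc : forall j k, dzb j (c k) - dzb k (c j) =
    mulz e0 j (th' k) - mulz e0 k (th' j) + rho1 e0 (eta' j k).
  move=> j k; apply/eqP; rewrite -subr_eq0; apply/eqP.
  apply: (@Mop_inj0 2) => //.
  rewrite MopB [Mop 2 (dzb _ _ - _)]MopB [Mop 2 (_ + rho1 _ _)]MopD.
  rewrite [Mop 2 (mulz _ _ _ - _)]MopB -!dzb_Mop !Mop_mulz Mop_rho1 !PqK //.
  by rewrite Hw subrr.
exists (iota c); exists (- iota th').
exists (fun k => onel (th' k) + \sum_j Bop j (eta' j k)).
move=> k m.
have E : w k = dzb k (iota c) +
   (rho1 e0 (onel (th' k)) - mulz e0 k (iota th') +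
    rho1 e0 (\sum_j Bop j (eta' j k))).
  rewrite -[w k](@PqK 1) // -/(c k) cartan; congr (_ + _).
  under eq_bigr do rewrite Hc BopD BopB.
  rewrite big_split /= sumrB sum_Bop_mulz /iota.
  congr (_ - _ + _).
    rewrite [RHS]raddf_sum; apply: eq_bigr => j _ /=.
    by rewrite (BopC (mulz e0 k)) //; exact: polyop_mulz.
  rewrite [RHS]raddf_sum; apply: eq_bigr => j _ /=.
  by rewrite (BopC (rho1 e0) polyop_rho1).
have mN : mulz e0 k (- iota th') = - mulz e0 k (iota th') by exact: raddfN.
rewrite E /dbarb0 mN rho1D /= !(subE, addE, oppE) /=; ring.
Qed.
End Core.

Section Final.
Variables (R : realType) (n : nat) (e0 : 'I_n -> R[i]).
Local Notation C := R[i].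
Local Notation fps := (fps R n).
Implicit Types (f g : fps).

Lemma conji : conjc ('i : C) = - 'i.
Proof. by apply/eqP; rewrite eq_complex /= oppr0 !eqxx. Qed.
Lemma ii : ('i : C) * 'i = -1.
Proof. by rewrite -expr2 sqr_i. Qed.
Lemma i_neq0 : ('i : C) != 0.
Proof.
by rewrite eq_complex /= negb_and oner_eq0 orbT.
Qed.
Lemma two_neq0 : (2%:R : C) != 0.
Proof. by rewrite pnatr_eq0. Qed.

Lemma cM (x y : C) : conjc (x * y) = conjc x * conjc y.
Proof. exact: rmorphM. Qed.
Lemma cD (x y : C) : conjc (x + y) = conjc x + conjc y.
Proof. exact: rmorphD. Qed.
Lemma cB (x y : C) : conjc (x - y) = conjc x - conjc y.
Proof. exact: rmorphB. Qed.

Definition fIm (f : fps) : fps := fun m => (f m - fconj f m) / (2%:R * 'i).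

Lemma fRe_real f : is_real (fRe f).
Proof.
move=> [a b]; rewrite /fconj /fRe /=.
rewrite cM cD conjcK conjc_inv conjc_nat; ring.
Qed.
Lemma fIm_real f : is_real (fIm f).
Proof.
move=> [a b]; rewrite /fconj /fIm /=.
rewrite cM cB conjcK conjc_inv cM conjc_nat conji mulrN invrN; ring.
Qed.
Lemma decompE f x : f x = fRe f x + 'i * fIm f x.
Proof.
rewrite /fRe /fIm; field.
all: by rewrite -?complexiE ?i_neq0 ?two_neq0.
Qed.
Lemma mulz_Z j c f : mulz e0 j (fpsZ c f) = fpsZ c (mulz e0 j f).
Proof. by case: (@polyop_mulz R n e0 j) => -[_ ->]. Qed.
Lemma rho1_Z c f : rho1 e0 (fpsZ c f) = fpsZ c (rho1 e0 f).
Proof. by case: (@polyop_rho1 R n e0) => -[_ ->]. Qed.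
Lemma mulzD j f g : mulz e0 j (f + g) = mulz e0 j f + mulz e0 j g.
Proof. exact: raddfD. Qed.
Lemma rho10 : rho1 e0 0 = 0.
Proof. exact: raddf0. Qed.

Lemma aux0 (w k a b : C) : w + -1 * ('i * (k * b)) - k * a = w - k * (a + 'i * b).
Proof. ring. Qed.
Lemma aux1 (k a b : C) : k * (a + 'i * b) - 0 = - 'i * ('i * (k * a) + -1 * 0 - k * b).
Proof. have h := ii; ring: h. Qed.
Lemma aux2 (a b : C) : a - (a + 'i * b + (a + - 'i * b)) / 2%:R = 0.
Proof. by field. Qed.
Lemma aux3 (k a b c r1 r2 : C) :
  'i * (k * (a + c)) + -1 * 0 - k * b =
  'i * ((k * (a + 'i * b) - r1) + (k * c - r2)) + 'i * (r1 + r2).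
Proof. have h := ii; ring: h. Qed.
End Final.
Arguments fIm {R n}.

Theorem mainTheorem12 (R : realType) (n : nat) (e0 : 'I_n -> R[i]) :
  (3 <= n)%N ->
  \sum_(j < n) e0 j * conjc (e0 j) = 1 ->
  (* surjectivity onto H^1 *)
  (forall w : form01 R n, cocycle01 e0 w ->
     exists v : fps R n, is_real v /\ H1_eq e0 w (i_dbarb v)) /\
  (* the kernel is exactly J P *)
  (forall v : fps R n, is_real v ->
     (H1_eq e0 (i_dbarb v) (fun _ => @fps0 R n) <-> JP e0 v)).
Proof.
move=> _ He0; split.
  move=> w /(@exact_cocycle R n e0 He0) [F [h [eta H]]].
  exists (fIm F); split; first exact: fIm_real.
  exists (fRe F); split; first exact: fRe_real.
  exists h, eta => j m.
  rewrite -H /i_dbarb /dbarb0 /fpsD /fpsZ /dzb /= (@decompE R n F (m.1, incr m.2 j)).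
  exact: aux0.
move=> v vreal; split.
  case=> u [ureal [h [eta H]]].
  exists (fun m => v m + 'i * u m); split.
    exists (fpsZ (- 'i) h), (fun j => fpsZ (- 'i) (eta j)) => j m.
    rewrite mulz_Z rho1_Z !fpsZE -mulrDr -H.
    rewrite /dbarb0 /fps0 /i_dbarb /fpsD /fpsZ /dzb /=.
    exact: aux1.
  exists 0 => m; rewrite rho10 zeroE /fRe /fconj /=.
  have hv : conjc (v (m.2, m.1)) = v m by exact: vreal m.
  have hu : conjc (u (m.2, m.1)) = u m by exact: ureal m.
  rewrite cD cM conji hv hu; exact: aux2.
case=> f [[h1 [eta1 Hf]] [h2 Hj]].
exists (fIm f); split; first exact: fIm_real.
exists (fpsZ 'i (h1 + h2)), (fun j => fpsZ 'i (eta1 j + dzb j h2)) => j m.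
rewrite mulz_Z rho1_Z mulzD rho1D !fpsZE !addE.
set x := (m.1, incr m.2 j).
have E1 : v x = fRe f x + rho1 e0 h2 x by rewrite -Hj; ring.
have E2 := congr1 (fun F => F m) (@dzb_rho1 R n e0 j h2).
have E3 := Hf j m.
have E4 := @decompE R n f x.
rewrite addE /= /dzb /= -/x in E2.
rewrite /dbarb0 /dzb /fps0 /= -/x subr0 in E3.
have eM1 : mulz e0 j h1 m = (m.2 j).+1%:R * f x - rho1 e0 (eta1 j) m.
  by rewrite E3 addrK.
have eM2 : mulz e0 j h2 m = (m.2 j).+1%:R * rho1 e0 h2 x - rho1 e0 (dzb j h2) m.
  by rewrite E2 addrK.
rewrite eM1 eM2 /i_dbarb /dbarb0 /fpsD /fpsZ /dzb /fps0 /= -/x E1 E4.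
exact: aux3.
Qed.
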